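(* Let $f:X\to Y$ be a continuous map between sober topological spaces, and let $f^{\#}:C(Y)\to C(X)$, $W\mapsto f^{-1}(W)$. The following are equivalent: (1) $f$ is an epimorphism in the category $\mathbf{Sob}$ of sober spaces and continuous maps; (2) $f^{\#}$ is injective; (3) $f^{\#}$ is a monomorphism in the category of complete idealic semirings; (4) for every closed subset $z$ of $Y$, the set $f(X)\cap z$ is dense in $z$.
   Context: A topological space is sober if every irreducible closed subset has a unique generic point. An idealic semiring is a set with two commutative associative operations $+,\cdot$ with units $0,1$, where $+$ is idempotent, $\cdot$ distributes over $+$, $0$ is absorbing for $\cdot$ and $1$ is absorbing for $+$; it is complete if arbitrary (infinite) sums exist and multiplication distributes over them, and morphisms of complete idealic semirings preserve $0,1$, products and arbitrary sums. For a sober space $X$, $C(X)$ is the set of closed subsets with $Z+W=Z\cap W$ (arbitrary sums being intersections), $Z\cdot W=Z\cup W$, $0=X$, $1=\emptyset$; this is a complete idealic semiring with idempotent multiplication, and $f^{\#}$ is a morphism of such. *)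

(* Defs.v *)
From HB Require Import structures.
From mathcomp Require Import all_boot all_order all_algebra.
From mathcomp Require Import all_classical all_reals all_analysis.

Set Implicit Arguments.
Unset Strict Implicit.
Unset Printing Implicit Defensive.

Local Open Scope classical_set_scope.

Definition irreducible_closed (T : topologicalType) (Z : set T) : Prop :=
  [/\ closed Z, Z !=set0 &
      forall A B : set T, closed A -> closed B -> Z `<=` A `|` B ->
        Z `<=` A \/ Z `<=` B].

Definition generic_point (T : topologicalType) (Z : set T) (x : T) : Prop :=
  closure [set x] = Z.

Definition sober (T : topologicalType) : Prop :=
  forall Z : set T, irreducible_closed Z -> exists! x, generic_point Z x.

Definition sob_epi (X Y : topologicalType) (f : X -> Y) : Prop :=
  forall (Z : topologicalType), sober Z ->
  forall g h : Y -> Z, continuous g -> continuous h ->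
    g \o f = h \o f -> g = h.

(* Raw data: carrier, +, *, 0, 1 and an arbitrary-sum operation on subsets
   (since + is idempotent, a sum of a family only depends on its set of
   values). *)
Record csr := CSR {
  car :> Type;
  cadd : car -> car -> car;
  cmul : car -> car -> car;
  czero : car;
  cone : car;
  csum : set car -> car }.

Definition cle (A : csr) (x y : A) : Prop := cadd x y = y.

Definition is_complete_idealic_semiring (A : csr) : Prop :=
  [/\ [/\ (forall x y z : A, cadd x (cadd y z) = cadd (cadd x y) z),
          (forall x y : A, cadd x y = cadd y x),
          (forall x : A, cadd (czero A) x = x) &
          (forall x : A, cadd x x = x)],
      [/\ (forall x y z : A, cmul x (cmul y z) = cmul (cmul x y) z),
          (forall x y : A, cmul x y = cmul y x) &
          (forall x : A, cmul (cone A) x = x)],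
      [/\ (forall x y z : A, cmul x (cadd y z) = cadd (cmul x y) (cmul x z)),
          (forall x : A, cmul (czero A) x = czero A) &
          (forall x : A, cadd (cone A) x = cone A)] &
      [/\ (forall S : set A, forall s, S s -> cle s (csum S)),
          (forall (S : set A) u, (forall s, S s -> cle s u) -> cle (csum S) u) &
          (forall (x : A) (S : set A), cmul x (csum S) = csum ((cmul x) @` S))]].

Definition csr_morph (A B : csr) (h : A -> B) : Prop :=
  [/\ h (czero A) = czero B, h (cone A) = cone B,
      (forall x y, h (cmul x y) = cmul (h x) (h y)) &
      (forall S : set A, h (csum S) = csum (h @` S))].

Definition cis_mono (A B : csr) (h : A -> B) : Prop :=
  forall (D : csr), is_complete_idealic_semiring D ->
  forall a b : D -> A, csr_morph a -> csr_morph b ->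
    h \o a = h \o b -> a = b.

Definition closed_set (X : topologicalType) := {Z : set X | closed Z}.

Definition CX (X : topologicalType) : csr :=
  @CSR (closed_set X)
    (fun Z W => exist _ (sval Z `&` sval W) (closedI (proj2_sig Z) (proj2_sig W)))
    (fun Z W => exist _ (sval Z `|` sval W) (closedU (proj2_sig Z) (proj2_sig W)))
    (exist _ setT closedT)
    (exist _ set0 closed0)
    (fun S => exist _ (\bigcap_(Z in S) sval Z)
                (closed_bigI (fun Z _ => proj2_sig Z))).

Definition fsharp (X Y : topologicalType) (f : X -> Y) (fc : continuous f)
  : CX Y -> CX X :=
  fun W => exist _ (f @^-1` sval W)
             (proj1 (continuous_closedP f) fc _ (proj2_sig W)).

(* Main.v *)
Require Import Defs.
From HB Require Import structures.
From mathcomp Require Import all_boot all_order all_algebra.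
From mathcomp Require Import all_classical all_reals all_analysis.

Local Open Scope classical_set_scope.

Definition sier := bool.
HB.instance Definition _ := Choice.on sier.
Definition sop (A : set sier) : Prop := A false -> A true.
Lemma sopT : sop setT. Proof. by []. Qed.
Lemma sopI : setI_closed sop. Proof. by move=> A B hA hB [/hA ? /hB ?]. Qed.
Lemma sopU (I : Type) (f : I -> set sier) : (forall i, sop (f i)) -> sop (\bigcup_i f i).
Proof. by move=> h [i _ fi]; exists i => //; apply: h. Qed.
HB.instance Definition _ := isOpenTopological.Build sier sopT sopI sopU.
Lemma sier_open (A : set sier) : open A <-> sop A.
Proof. by []. Qed.

Lemma closure_sub (T : topologicalType) (A W : set T) :
  closed W -> A `<=` W -> closure A `<=` W.
Proof.
move=> cW AW; rewrite [X in _ `<=` X](closure_id W).1 //; exact: closureS.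
Qed.

Lemma sier_closed (Z : set sier) : closed Z -> Z true -> Z false.
Proof.
rewrite -openC => /sier_open h Zt; apply: contrapT => nZ; exact: (h nZ).
Qed.

Lemma sier_cl1 (b : sier) : closure [set b] = if b then setT else [set false].
Proof.
apply/seteqP; split.
- case: b; first by [].
  apply: closure_sub; last by [].
  by rewrite -openC; apply/sier_open => /= h; exfalso; apply: h.
- case: b; last by move=> x /= ->; exact: subset_closure.
  have h := @sier_closed _ (@closed_closure _ [set (true : sier)]).
  have ht : closure [set (true : sier)] true by exact: subset_closure.
  by case => _; [exact: ht | exact: h].
Qed.

Lemma sier_sober : sober sier.
Proof.
move=> Z [cZ [z Zz] irr].
have Zf : Z false.
  by case: z Zz => // Zt; apply: sier_closed.
have [Zt|nZt] := pselect (Z true).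
- have ZT : Z = setT by apply/seteqP; split => // -[].
  exists true; split; first by rewrite /generic_point sier_cl1 ZT.
  move=> x; rewrite /generic_point sier_cl1 ZT; case: x => // h.
  by have : [set false] (true : sier) by rewrite h.
- have ZF : Z = [set false].
    by apply/seteqP; split => [[]|x ->].
  exists false; split; first by rewrite /generic_point sier_cl1 ZF.
  move=> x; rewrite /generic_point sier_cl1 ZF; case: x => // h.
  by have : [set false] (true : sier) by rewrite -h.
Qed.

Lemma cs_eq (T : topologicalType) (A B : closed_set T) : sval A = sval B -> A = B.
Proof.
case: A B => A hA [B hB] /= eAB; subst; congr exist; exact: Prop_irrelevance.
Qed.

Lemma sober_T0 (T : topologicalType) (p q : T) : sober T ->
  closure [set p] = closure [set q] -> p = q.
Proof.
move=> sT e.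
have irr : irreducible_closed (closure [set p]).
  split; first exact: closed_closure.
    by exists p; apply: subset_closure.
  move=> A B cA cB sub.
  have [] := sub p (subset_closure (erefl p)) => [Ap|Bp].
    by left; apply: closure_sub => // x ->.
  by right; apply: closure_sub => // x ->.
have [x [_ u]] := sT _ irr.
by rewrite -(u p erefl) (u q (esym e)).
Qed.

Section Main.
Variables (X Y : topologicalType) (f : X -> Y) (fc : continuous f).

Definition P4 := forall z : set Y, closed z -> z `<=` closure (range f `&` z).

Lemma inj_P4 : injective (fsharp fc) <-> P4.
Proof.
split.
- move=> inj z cz.
  pose W : closed_set Y := exist _ (closure (range f `&` z)) (@closed_closure _ (range f `&` z)).
  pose Z : closed_set Y := exist _ z cz.
  have : fsharp fc W = fsharp fc Z.
    apply: cs_eq => /=; apply/seteqP; split => x /=.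
      by apply: closure_sub => // y [].
    by move=> zx; apply: subset_closure; split => //; exists x.
  by move=> /inj /(congr1 sval) /= ->.
- move=> h4 Z W e.
  have e' := congr1 sval e; rewrite /= in e'.
  have sub : forall A B : closed_set Y, f @^-1` sval A = f @^-1` sval B ->
      sval A `<=` sval B.
    move=> [A cA] [B cB] /= eAB y Ay.
    suff hh : closure (range f `&` A) `<=` B by apply: hh; exact: h4 _ cA y Ay.
    apply: closure_sub cB _ => _ [[x _ <-] Afx].
    by have : (f @^-1` A) x by []; rewrite eAB.
  by apply: cs_eq; apply/seteqP; split; apply: sub.
Qed.

Lemma P4_epi : P4 -> sob_epi f.
Proof.
move=> h4 Z sZ g h cg ch e; apply/funext => y.
have key : forall g h : Y -> Z, continuous g -> continuous h -> g \o f = h \o f ->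
    closure [set h y] `<=` closure [set g y].
  move=> g' h' cg' ch' e'.
  pose C := closure [set g' y].
  have cC : closed C := @closed_closure _ [set g' y].
  have cU : closed (g' @^-1` C) := proj1 (continuous_closedP g') cg' _ cC.
  have cV : closed (h' @^-1` C) := proj1 (continuous_closedP h') ch' _ cC.
  have yU : (g' @^-1` C) y by apply: subset_closure.
  have yV : (h' @^-1` C) y.
    suff hh : closure (range f `&` (g' @^-1` C)) `<=` h' @^-1` C.
      by apply: hh; exact: h4 _ cU y yU.
    apply: closure_sub cV _ => _ [[x _ <-] Ufx] /=.
    by have := congr1 (fun k => k x) e'; rewrite /= => <-.
  by apply: closure_sub => // _ ->.
apply: sober_T0 => //; apply/seteqP; split; apply: key => //.
Qed.

Lemma epi_inj : sob_epi f -> injective (fsharp fc).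
Proof.
move=> ep Z W e.
have e' : forall x, sval Z (f x) <-> sval W (f x).
  move=> x; split.
    by change (sval (fsharp fc Z) x -> sval (fsharp fc W) x); rewrite e.
  by change (sval (fsharp fc W) x -> sval (fsharp fc Z) x); rewrite e.
pose g (A : closed_set Y) (y : Y) : sier := asbool (~ sval A y).
have cg : forall A, continuous (g A).
  move=> [A cA]; apply/continuousP => B /sier_open oB.
  have [Bf|nBf] := pselect (B false).
    have -> : g (exist _ A cA) @^-1` B = setT.
      apply/seteqP; split => // y _ /=; rewrite /g.
      by case: asboolP => _ //; apply: oB.
    exact: openT.
  have [Bt|nBt] := pselect (B true).
    have -> : g (exist _ A cA) @^-1` B = ~` A.
      apply/seteqP; split => y /=; rewrite /g.
        by case: asboolP.
      by move=> nA; case: asboolP.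
    exact: closed_openC.
  have -> : g (exist _ A cA) @^-1` B = set0.
    apply/seteqP; split => // y /=; rewrite /g.
    by case: asboolP.
  exact: open0.
have := ep _ sier_sober (g Z) (g W) (cg Z) (cg W).
have gf : g Z \o f = g W \o f.
  apply/funext => x /=; rewrite /g.
  by congr asbool; apply/propext; split => h1 h2; apply: h1; apply/e'.
move=> /(_ gf) eg; apply: cs_eq; apply/funext => y; apply/propext.
have := congr1 (fun k => k y) eg; rewrite /g /=.
by case: asboolP => a; case: asboolP => b // _; split => h1;
  apply: contrapT => h2; [apply: b|apply: a].
Qed.

(* the kernel pair semiring *)
Record pr := Pr { p1 : closed_set Y; p2 : closed_set Y;
                  pe : fsharp fc p1 = fsharp fc p2 }.

Lemma pr_eq (d e : pr) : sval (p1 d) = sval (p1 e) ->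
  sval (p2 d) = sval (p2 e) -> d = e.
Proof.
case: d e => a b h [a' b' h'] /= /cs_eq ea /cs_eq eb.
subst; congr Pr; exact: Prop_irrelevance.
Qed.

Lemma fs_add (a b : CX Y) : fsharp fc (Defs.cadd a b) = Defs.cadd (fsharp fc a) (fsharp fc b).
Proof. exact: cs_eq. Qed.
Lemma fs_mul (a b : CX Y) : fsharp fc (Defs.cmul a b) = Defs.cmul (fsharp fc a) (fsharp fc b).
Proof. exact: cs_eq. Qed.

Definition padd (d e : pr) : pr :=
  @Pr (@Defs.cadd (CX Y) (p1 d) (p1 e)) (@Defs.cadd (CX Y) (p2 d) (p2 e))
    (ltac:(by rewrite !fs_add !pe)).
Definition pmul (d e : pr) : pr :=
  @Pr (@Defs.cmul (CX Y) (p1 d) (p1 e)) (@Defs.cmul (CX Y) (p2 d) (p2 e))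
    (ltac:(by rewrite !fs_mul !pe)).
Definition pzero : pr := @Pr (Defs.czero (CX Y)) (Defs.czero (CX Y)) (@cs_eq _ _ _ erefl).
Definition pone : pr := @Pr (Defs.cone (CX Y)) (Defs.cone (CX Y)) (@cs_eq _ _ _ erefl).

Lemma psum_pf (S : set pr) :
  fsharp fc (@Defs.csum (CX Y) (p1 @` S)) = fsharp fc (@Defs.csum (CX Y) (p2 @` S)).
Proof.
apply: cs_eq => /=; apply/seteqP; split => x /= h _ [d Sd <-].
- have := h _ (ex_intro2 _ _ d Sd erefl).
  by have := congr1 sval (pe d) => /= e1; have -> : sval (p2 d) (f x) = sval (p1 d) (f x) by
    have := congr1 (fun k => k x) e1.
- have := h _ (ex_intro2 _ _ d Sd erefl).
  by have := congr1 sval (pe d) => /= e1; have -> : sval (p1 d) (f x) = sval (p2 d) (f x) by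
    have := congr1 (fun k => k x) e1.
Qed.

Definition psum (S : set pr) : pr := @Pr (@Defs.csum (CX Y) (p1 @` S)) (@Defs.csum (CX Y) (p2 @` S)) (psum_pf S).

Definition D : csr := @CSR pr padd pmul pzero pone psum.

Lemma comp_sum1 (q : pr -> closed_set Y) (S : set pr) s : S s ->
  sval (q s) `&` \bigcap_(Z in q @` S) sval Z = \bigcap_(Z in q @` S) sval Z.
Proof.
move=> Ss; apply/seteqP; split => [y []//|y h]; split => //.
exact: h (ex_intro2 _ _ s Ss erefl).
Qed.

Lemma comp_sum2 (q : pr -> closed_set Y) (S : set pr) u :
  (forall s, S s -> sval (q s) `&` sval (q u) = sval (q u)) ->
  \bigcap_(Z in q @` S) sval Z `&` sval (q u) = sval (q u).
Proof.
move=> h; apply/seteqP; split => [y []//|y uy]; split => //.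
move=> _ [s Ss <-]; rewrite -(h s Ss) in uy; by case: uy.
Qed.

Lemma comp_sum3 (q : pr -> closed_set Y) (x : pr) (S : set pr) :
  (forall d, sval (q (pmul x d)) = sval (q x) `|` sval (q d)) ->
  sval (q x) `|` \bigcap_(Z in q @` S) sval Z =
  \bigcap_(Z in q @` (pmul x @` S)) sval Z.
Proof.
move=> hq; apply/seteqP; split => y.
- move=> h _ [_ [d Sd <-] <-]; rewrite hq.
  case: h => [l|r]; [by left | right; exact: r _ (ex_intro2 _ _ d Sd erefl)].
- move=> h; have [qx|nqx] := pselect (sval (q x) y); first by left.
  right => _ [d Sd <-].
  have := h _ (ex_intro2 _ _ (pmul x d) (ex_intro2 _ _ d Sd erefl) erefl).
  by rewrite hq => -[].
Qed.

Lemma D_cis : is_complete_idealic_semiring D.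
Proof.
split; first split.
- by move=> a b c; apply: pr_eq => /=; rewrite setIA.
- by move=> a b; apply: pr_eq => /=; rewrite setIC.
- by move=> a; apply: pr_eq => /=; rewrite setTI.
- by move=> a; apply: pr_eq => /=; rewrite setIid.
- split.
  + by move=> a b c; apply: pr_eq => /=; rewrite setUA.
  + by move=> a b; apply: pr_eq => /=; rewrite setUC.
  + by move=> a; apply: pr_eq => /=; rewrite set0U.
- split.
  + by move=> a b c; apply: pr_eq => /=; rewrite setUIr.
  + by move=> a; apply: pr_eq => /=; rewrite setTU.
  + by move=> a; apply: pr_eq => /=; rewrite set0I.
- split.
  + by move=> S s Ss; apply: pr_eq => /=; apply: comp_sum1.
  + move=> S u h; rewrite /cle; apply: pr_eq => /=; apply: comp_sum2 => s Ss.
    * exact: (congr1 (fun d => sval (p1 d)) (h s Ss)).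
    * exact: (congr1 (fun d => sval (p2 d)) (h s Ss)).
  + by move=> x S; apply: pr_eq => /=; apply: comp_sum3.
Qed.

Lemma mono_inj : cis_mono (fsharp fc) -> injective (fsharp fc).
Proof.
move=> m Z W e.
have m1 : csr_morph (p1 : D -> CX Y) by split.
have m2 : csr_morph (p2 : D -> CX Y) by split.
have := m D D_cis p1 p2 m1 m2 (funext pe).
by move=> /(congr1 (fun k : D -> CX Y => k (@Pr Z W e))).
Qed.

Lemma inj_mono : injective (fsharp fc) -> cis_mono (fsharp fc).
Proof.
by move=> inj D0 _ a b _ _ e; apply/funext => d; apply: inj;
  have := congr1 (fun k => k d) e.
Qed.

End Main.

Theorem proposition1p6 (X Y : topologicalType) (f : X -> Y)
  (sX : sober X) (sY : sober Y) (fc : continuous f) :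
  [/\ (sob_epi f <-> injective (fsharp fc)),
      (injective (fsharp fc) <-> cis_mono (fsharp fc)) &
      (cis_mono (fsharp fc) <->
         forall z : set Y, closed z -> z `<=` closure (range f `&` z))].
Proof.
split.
- split; first exact: epi_inj.
  by move=> /inj_P4; apply: P4_epi.
- split; [exact: inj_mono | exact: mono_inj].
- split.
  + by move=> /mono_inj /inj_P4.
  + by move=> h; apply: inj_mono; apply/inj_P4.
Qed.
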